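(* Let $\Delta$ be an $n$-dimensional simplex in $\mathbb{R}^n$, and let $K \subseteq \Delta$ be a compact convex set. Suppose that $K \cap F = \emptyset$ for every face $F$ of $\Delta$ such that $\dim(F) \leq n-2$. Then (i) for each unit vector $u$, the projection $K_u$ can be translated (within $u^\perp$) into the relative interior of $\Delta_u$; (ii) there exists $\epsilon > 1$ such that, for each unit vector $u$, the projection $\Delta_u$ contains a translate of $\epsilon K_u$ (the same $\epsilon$ for all $u$).
   Context: For a unit vector $u$ and a set $S\subseteq\mathbb{R}^n$, $S_u$ denotes the orthogonal projection of $S$ onto the hyperplane $u^\perp$. *)

(* Defs.v *)
From HB Require Import structures.
From mathcomp Require Import all_boot all_order all_algebra.
From mathcomp Require Import all_classical all_reals all_analysis.
Set Implicit Arguments. Unset Strict Implicit. Unset Printing Implicit Defensive.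
Import Order.TTheory GRing.Theory Num.Theory.
Import numFieldTopology.Exports numFieldNormedType.Exports.
Local Open Scope ring_scope.
Local Open Scope classical_set_scope.

Definition dotp (R : realType) (n : nat) (x y : 'rV[R]_n) : R := (x *m y^T) 0 0.

Definition unit_vec (R : realType) (n : nat) (u : 'rV[R]_n) : Prop := dotp u u = 1.

Definition proj_perp (R : realType) (n : nat) (u x : 'rV[R]_n) : 'rV[R]_n :=
  x - dotp x u *: u.

Definition projset (R : realType) (n : nat) (u : 'rV[R]_n) (S : set 'rV[R]_n)
  : set 'rV[R]_n := proj_perp u @` S.

Definition convex_set_of (R : realType) (n : nat) (K : set 'rV[R]_n) : Prop :=
  forall x y t, K x -> K y -> 0 <= t <= 1 -> K ((1 - t) *: x + t *: y).

Definition aff_hull (R : realType) (n : nat) (A : set 'rV[R]_n) : set 'rV[R]_n :=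
  [set y | exists (m : nat) (p : 'I_m -> 'rV[R]_n) (w : 'I_m -> R),
     (forall i, A (p i)) /\ \sum_(i < m) w i = 1 /\ y = \sum_(i < m) w i *: p i].

Definition relint (R : realType) (n : nat) (A : set 'rV[R]_n) : set 'rV[R]_n :=
  [set x | A x /\ exists e : R, 0 < e /\
     forall y, aff_hull A y -> dotp (y - x) (y - x) < e ^+ 2 -> A y].

Definition aff_indep (R : realType) (n : nat) (v : 'I_n.+1 -> 'rV[R]_n) : Prop :=
  forall w : 'I_n.+1 -> R, \sum_i w i = 0 -> \sum_i w i *: v i = 0 ->
    forall i, w i = 0.

(* convex hull of the vertices v_i, i in S : the face of the simplex spanned by S
   (its dimension is #|S| - 1); S = setT gives the simplex itself *)
Definition face (R : realType) (n : nat) (v : 'I_n.+1 -> 'rV[R]_n)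
  (S : {set 'I_n.+1}) : set 'rV[R]_n :=
  [set x | exists w : 'I_n.+1 -> R, (forall i, 0 <= w i) /\
     (forall i, i \notin S -> w i = 0) /\ \sum_i w i = 1 /\
     x = \sum_i w i *: v i].

Definition simplex (R : realType) (n : nat) (v : 'I_n.+1 -> 'rV[R]_n) :=
  face v [set: 'I_n.+1].

(* Main.v *)
Require Import Defs.
From HB Require Import structures.
From mathcomp Require Import all_boot all_order all_algebra.
From mathcomp Require Import all_classical all_reals all_analysis.
From mathcomp Require Import zify ring lra.
Import Order.TTheory GRing.Theory Num.Theory.
Import numFieldTopology.Exports numFieldNormedType.Exports.
Local Open Scope ring_scope.
Local Open Scope classical_set_scope.
Section S1.
Variables (R : realType) (n : nat) (v : 'I_n.+1 -> 'rV[R]_n).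

Definition Mv : 'M[R]_(n.+1, 1 + n) := row_mx (const_mx 1) (\matrix_i v i).

Lemma Mv_mul (c : 'rV[R]_n.+1) :
  c *m Mv = row_mx (\sum_i c 0 i)%:M (\sum_i c 0 i *: v i).
Proof.
rewrite /Mv mul_mx_row; congr row_mx.
  apply/rowP => j; rewrite !mxE (ord1 j) eqxx mulr1n; apply: eq_bigr => i _.
  by rewrite mxE mulr1.
by rewrite mulmx_sum_row; apply: eq_bigr => i _; rewrite rowK.
Qed.

Lemma span_coef : aff_indep v -> exists B : 'M[R]_(n.+1),
  forall z : 'rV[R]_n, \sum_i (row_mx (0 : 'rV_1) z *m B) 0 i = 0 /\
     \sum_i (row_mx (0 : 'rV_1) z *m B) 0 i *: v i = z.
Proof.
move=> Hv.
have fr : row_free Mv.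
  apply: inj_row_free => c; rewrite Mv_mul => e.
  have /eq_row_mx [h1 h2] : row_mx (\sum_i c 0 i)%:M (\sum_i c 0 i *: v i) = row_mx (0 : 'M[R]_(1,1)) (0 : 'rV[R]_n) by rewrite row_mx0.
  have s0 : \sum_i c 0 i = 0 by move/matrixP: h1 => /(_ 0 0); rewrite !mxE eqxx mulr1n.
  apply/rowP => i; rewrite mxE; exact: (Hv (fun i => c 0 i) s0 h2 i).
have un : Mv \in unitmx by rewrite -row_free_unit.
exists (invmx Mv) => z.
have e := mulmxKV un (row_mx (0 : 'rV_1) z).
rewrite Mv_mul in e; have [h1 h2] := @eq_row_mx _ 1 1 n _ _ _ _ e; split => //.
by move/matrixP: h1 => /(_ 0 0); rewrite !mxE eqxx mulr1n.
Qed.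
End S1.
Lemma cont_sum (R : realType) (T : topologicalType) (V : normedModType R) (I : Type)
  (s : seq I) (F : I -> T -> V) :
  (forall i, continuous (F i)) -> continuous (fun x => \sum_(i <- s) F i x).
Proof.
move=> H; elim: s => [|a s IH].
  under eq_fun do rewrite big_nil; exact: cst_continuous.
under eq_fun do rewrite big_cons.
move=> x; apply: continuousD; [exact: H | exact: IH].
Qed.

Section S.
Variables (R : realType) (n : nat) (v : 'I_n.+1 -> 'rV[R]_n).

Definition phi (w : 'rV[R]_n.+1) : 'rV[R]_n := \sum_i w 0 i *: v i.

Lemma phi_cont : continuous phi.
Proof.
apply: (@cont_sum R) => i x; apply: continuousZr_tmp; exact: coord_continuous.
Qed.

Definition Cset (K : set 'rV[R]_n) : set 'rV[R]_n.+1 :=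
  [set w : 'rV[R]_n.+1 | (forall i, 0 <= w 0 i) /\ \sum_i w 0 i = 1 /\ K (phi w)].

Lemma Cset_compact K : compact K -> compact (Cset K).
Proof.
move=> cK.
have cB := @rV_compact R n.+1 (fun=> `[(0:R),1]) (fun=> @segment_compact R 0 1).
set B := (X in compact X) in cB.
have clS : closed [set w : 'rV[R]_n.+1 | \sum_i w 0 i = 1].
  apply: (@preimage_closed _ _ (fun w : 'rV[R]_n.+1 => \sum_i w 0 i) [set 1]).
    move=> w _; apply: (@cont_sum R) => i; exact: coord_continuous.
  exact: closed_eq.
have clK : closed (phi @^-1` K).
  apply: preimage_closed; first by move=> w _; exact: phi_cont.
  apply: compact_closed => //; exact: norm_hausdorff.
have -> : Cset K = (B `&` [set w | \sum_i w 0 i = 1]) `&` (phi @^-1` K).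
  apply/seteqP; split => w /=.
    move=> [w0 [s1 Kw]]; split => //; split => // i.
    rewrite /= in_itv /= w0 /=; rewrite -s1 (bigD1 i) //= lerDl.
    by apply: sumr_ge0 => j _.
  move=> [[Bw s1] Kw]; split; last by split.
  move=> i; have := Bw i; rewrite /= in_itv /= => /andP[] //.
by apply: compact_closedI => //; apply: compact_closedI.
Qed.
Lemma pos_pair K :
  (forall S : {set 'I_n.+1}, (#|S|.+1 <= n)%N -> K `&` face v S = set0) ->
  forall w, Cset K w -> forall i j, i != j -> 0 < w 0 i + w 0 j.
Proof.
move=> HF w [w0 [s1 Kw]] i j ij.
rewrite lt_neqAle addr_ge0 // andbT; apply/eqP => /esym e.
have wi : w 0 i = 0.
  apply/eqP; rewrite eq_le w0 andbT -e lerDl; exact: w0.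
have wj : w 0 j = 0 by move: e; rewrite wi add0r.
pose S := ~: [set i; j].
have cS : (#|S|.+1 <= n)%N.
  have := cardsC [set i; j]; rewrite cards2 ij card_ord.
  rewrite /S; lia.
have : (K `&` face v S) (phi w).
  split => //; exists (fun k => w 0 k); split => //; split => //.
  move=> k; rewrite /S !inE negbK => /orP[] /eqP ->; by [].
by rewrite HF.
Qed.

Lemma delta_ex K : compact K ->
  (forall S : {set 'I_n.+1}, (#|S|.+1 <= n)%N -> K `&` face v S = set0) ->
  exists d : R, 0 < d /\ d <= 1 /\
    forall w, Cset K w -> forall i j, i != j -> d <= w 0 i + w 0 j.
Proof.
move=> cK HF.
case: (pselect (exists w, Cset K w)) => [[w0 Cw0]|nC]; last first.
  exists 1; split => //; split => // w Cw; exfalso; apply: nC; by exists w.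
have pair : forall p : 'I_n.+1 * 'I_n.+1, exists d : R, 0 < d /\ d <= 1 /\
    (p.1 != p.2 -> forall w, Cset K w -> d <= w 0 p.1 + w 0 p.2).
  move=> [i j] /=; case: (eqVneq i j) => [_|ij].
    by exists 1; split => //; split.
  have cf : continuous (fun w : 'rV[R]_n.+1 => w 0 i + w 0 j).
    by move=> x; apply: continuousD; apply: coord_continuous.
  have [c Cc cmin] := @EVT_min_rV R n.+1 (fun w : 'rV[R]_n.+1 => w 0 i + w 0 j)
     (Cset K) (ex_intro _ w0 Cw0) (Cset_compact K cK) (continuous_subspaceT cf).
  have Cc' : Cset K c by move: Cc; rewrite inE.
  exists (Order.min (c 0 i + c 0 j) 1); split.
    rewrite lt_min ltr01 andbT; exact: (@pos_pair K HF c Cc' i j ij).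
  split; first by rewrite ge_min lexx orbT.
  move=> _ w Cw; rewrite ge_min; apply/orP; left; apply: cmin; by rewrite inE.
have [f Hf] := choice pair.
exists (\big[Order.min/1]_p f p); split.
  apply/bigmin_gtP; split => // p _; by case: (Hf p).
split; first exact: bigmin_le_id.
move=> w Cw i j ij; apply: (le_trans (y := f (i, j))); first exact: bigmin_le.
by case: (Hf (i, j)) => _ [_ /(_ ij)]; apply.
Qed.
End S.
Section D.
Context {R : realType} {n : nat}.
Implicit Types (x y z u h : 'rV[R]_n).

Lemma dotpE x y : dotp x y = \sum_i x 0 i * y 0 i.
Proof. by rewrite /dotp !mxE; apply: eq_bigr => i _; rewrite mxE. Qed.

Lemma dotpDl x y z : dotp (x + y) z = dotp x z + dotp y z.
Proof. by rewrite !dotpE -big_split; apply: eq_bigr => i _; rewrite mxE mulrDl. Qed.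

Lemma dotpZl a x y : dotp (a *: x) y = a * dotp x y.
Proof. by rewrite !dotpE mulr_sumr; apply: eq_bigr => i _; rewrite mxE mulrA. Qed.

Lemma dotpNl x y : dotp (- x) y = - dotp x y.
Proof. by rewrite -scaleN1r dotpZl mulN1r. Qed.

Lemma dotpBl x y z : dotp (x - y) z = dotp x z - dotp y z.
Proof. by rewrite dotpDl dotpNl. Qed.

Lemma dotp_suml (I : finType) (F : I -> 'rV[R]_n) y :
  dotp (\sum_i F i) y = \sum_i dotp (F i) y.
Proof.
rewrite dotpE; under [RHS]eq_bigr do rewrite dotpE.
rewrite exchange_big /=; apply: eq_bigr => j _; rewrite summxE mulr_suml //.
Qed.

Lemma dotp_ge0_coord x i : (x 0 i) ^+ 2 <= dotp x x.
Proof.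
rewrite dotpE (bigD1 i) //= expr2 lerDl; apply: sumr_ge0 => j _.
by rewrite -expr2 sqr_ge0.
Qed.

Lemma projD u x y : proj_perp u (x + y) = proj_perp u x + proj_perp u y.
Proof. rewrite /proj_perp dotpDl scalerDl; rewrite opprD addrACA //. Qed.

Lemma projZ u a x : proj_perp u (a *: x) = a *: proj_perp u x.
Proof. by rewrite /proj_perp dotpZl scalerBr scalerA. Qed.

Lemma projN u x : proj_perp u (- x) = - proj_perp u x.
Proof. by rewrite -scaleN1r projZ scaleN1r. Qed.

Lemma proj_u u : unit_vec u -> proj_perp u u = 0.
Proof. by rewrite /unit_vec /proj_perp => ->; rewrite scale1r subrr. Qed.

Lemma proj_orth u x : unit_vec u -> dotp (proj_perp u x) u = 0.
Proof. by rewrite /unit_vec /proj_perp => H; rewrite dotpBl dotpZl H mulr1 subrr. Qed.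

Lemma proj_id u h : dotp h u = 0 -> proj_perp u h = h.
Proof. by rewrite /proj_perp => ->; rewrite scale0r subr0. Qed.
End D.

Section W. Variable R : realType.
Lemma weights (N : nat) (w a : 'I_N -> R) (k : 'I_N) (d th : R) :
  (forall i, 0 <= w i) -> 0 < a k -> (forall i, - a i <= N%:R * a k) ->
  (forall i j, i != j -> d <= w i + w j) -> 0 < th -> (N%:R + 1) * th <= d ->
  (1 <= N%:R :> R) ->
  exists mu : R, 0 <= mu /\ forall i, 0 <= w i - (if i == k then th else 0) + mu * a i.
Proof.
move=> w0 ak aN dw th0 thd N1.
pose m := Order.max 0 (th - w k).
have m0 : 0 <= m by rewrite le_max lexx.
have mth : th - w k <= m by rewrite le_max lexx orbT.
exists (m / a k); split; first by rewrite divr_ge0 // ltW.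
move=> i; case: (eqVneq i k) => [->|ik].
  by rewrite mulfVK ?gt_eqF //; lra.
rewrite subr0.
have h1 : (m / a k) * a i >= - (N%:R * m).
  have := aN i; have := divr_ge0 m0 (ltW ak).
  set q := m / a k => q0 hai.
  have -> : m = q * a k by rewrite /q mulfVK ?gt_eqF.
  nra.
have h2 : N%:R * m <= w i.
  have := dw i k ik; have := w0 i; have := w0 k.
  rewrite /m; case: (leP 0 (th - w k)) => H; nra.
lra.
Qed.
Lemma coef_bound (n : nat) (B : 'M[R]_n.+1) (eta : R) : 0 < eta ->
  exists e : R, 0 < e /\ forall h : 'rV[R]_n, dotp h h < e ^+ 2 ->
    forall i, `|(row_mx (0 : 'rV[R]_1) h *m B) 0 i| <= eta.
Proof.
move=> eta0.
pose S := 1 + \sum_j \sum_i `|B j i|.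
have S1 : 1 <= S by rewrite /S lerDl; apply: sumr_ge0 => j _; apply: sumr_ge0.
have S0 : 0 < S by apply: lt_le_trans S1.
exists (eta / S); split; first by rewrite divr_gt0.
move=> h hh i.
have hz : forall j, `|row_mx (0 : 'rV[R]_1) h 0 j| <= eta / S.
  move=> j; rewrite mxE; case: splitP => j' _; first by rewrite mxE normr0 divr_ge0 // ltW.
  have := @dotp_ge0_coord R n h j'; move: (h 0 j') => x hx.
  have e0 : 0 < eta / S by rewrite divr_gt0.
  apply/ltW/ltr_normlP; split; nra.
rewrite mxE; apply: le_trans (ler_norm_sum _ _ _) _.
apply: (@le_trans _ _ (\sum_j (eta / S) * `|B j i|)).
  apply: ler_sum => j _; rewrite normrM; apply: ler_wpM2r => //.
rewrite -mulr_sumr.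
have : \sum_j `|B j i| <= S.
  apply: le_trans (_ : \sum_j \sum_i `|B j i| <= S); last by rewrite /S lerDr.
  apply: ler_sum => j _; rewrite (bigD1 i) //= lerDl; exact: sumr_ge0.
move=> hS; apply: le_trans (ler_wpM2l _ hS) _; first by rewrite divr_ge0 // ltW.
by rewrite divfK // lt0r_neq0.
Qed.
End W.
Lemma aff_hull_orth (R : realType) (n : nat) (u : 'rV[R]_n) (S : set 'rV[R]_n) y :
  unit_vec u -> aff_hull (projset u S) y -> dotp y u = 0.
Proof.
move=> uu [m [p [w [Hp [_ ->]]]]]; rewrite dotp_suml big1 // => i _.
rewrite dotpZl; have [x _ <-] := Hp i; by rewrite proj_orth // mulr0.
Qed.

Theorem lemma3p1 (R : realType) (n : nat) (v : 'I_n.+1 -> 'rV[R]_n)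
  (K : set 'rV[R]_n) :
  aff_indep v ->
  compact K -> convex_set_of K -> K `<=` simplex v ->
  (forall S : {set 'I_n.+1}, (#|S|.+1 <= n)%N -> K `&` face v S = set0) ->
  (forall u : 'rV[R]_n, unit_vec u ->
     exists t : 'rV[R]_n, dotp t u = 0 /\
       (fun x => x + t) @` projset u K `<=` relint (projset u (simplex v)))
  /\
  (exists eps : R, 1 < eps /\
     forall u : 'rV[R]_n, unit_vec u ->
       exists t : 'rV[R]_n, dotp t u = 0 /\
         (fun x => eps *: x + t) @` projset u K `<=` projset u (simplex v)).
Proof.
move=> Hv cK convK KS HF.
have [d [d0 [d1 Hd]]] := @delta_ex R n v K cK HF.
have [B HB] := @span_coef R n v Hv.
pose N : R := n.+1%:R.
have N1 : 1 <= N by rewrite /N ler1n.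
have N0 : 0 < N by apply: lt_le_trans N1.
pose th := d / (n.+2)%:R.
have thE : th * (n.+2)%:R = d by rewrite /th divfK // pnatr_eq0.
have th0 : 0 < th by rewrite /th divr_gt0 // ltr0n.
have thd : (N + 1) * th <= d by rewrite /N natr1 mulrC thE.
have th1 : th < 1.
  have : (2 : R) <= (n.+2)%:R by rewrite ler_nat.
  move: thE; move: ((n.+2)%:R : R) => m; nra.
have core : forall u, unit_vec u -> exists k : 'I_n.+1, forall x, K x ->
   exists b : 'I_n.+1 -> R, (forall i, 0 <= b i) /\ \sum_i b i = 1 - th /\
     exists mu : R, \sum_i b i *: v i = x - th *: v k + mu *: u.
  move=> u uu.
  pose a i := (row_mx (0 : 'rV[R]_1) u *m B) 0 i.
  have [Sa0 Sav0] := HB u.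
  have Sa : \sum_i a i = 0 := Sa0.
  have Sav : \sum_i a i *: v i = u := Sav0.
  clear Sa0 Sav0.
  have [k _ Hk] := @arg_maxP _ R 'I_n.+1 ord0 xpredT a isT.
  have Hk' : forall i, a i <= a k by move=> i; exact: Hk.
  have ak : 0 < a k.
    rewrite ltNge; apply/negP => ak0.
    have a0 : forall i, a i = 0.
      have S0 : \sum_i - a i = 0 by rewrite sumrN Sa oppr0.
      have P0 : forall j, true -> 0 <= - a j.
        by move=> j _; rewrite oppr_ge0 (le_trans (Hk' j)).
      have H := psumr_eq0P P0 S0.
      move=> i; apply/eqP; rewrite -oppr_eq0; apply/eqP; exact: H.
    move: uu; rewrite /unit_vec -Sav big1; last by move=> i _; rewrite a0 scale0r.
    rewrite dotpE big1; last by move=> i _; rewrite mxE mul0r.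
    by move/eqP; rewrite eq_sym oner_eq0.
  have aN : forall i, - a i <= n.+1%:R * a k.
    move=> i; move: Sa; rewrite (bigD1 i) //= => /eqP; rewrite addr_eq0 => /eqP ->.
    rewrite opprK mulr_natl.
    have -> : a k *+ n.+1 = \sum_(j < n.+1) a k by rewrite sumr_const card_ord.
    apply: (@le_trans _ _ (\sum_(j | j != i) a k)); first exact: ler_sum.
    rewrite [X in _ <= X](bigD1 i) //= lerDr ltW //.
  exists k => x Kx.
  have [w [w0 [_ [w1 xE]]]] := KS x Kx.
  have Cw : Cset R n v K (\row_i w i).
    split; first by move=> i; rewrite mxE.
    split; first by under eq_bigr do rewrite mxE.
    rewrite /phi; under eq_bigr do rewrite mxE; by rewrite -xE.
  have Hdw : forall i j, i != j -> d <= w i + w j.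
    by move=> i j ij; have := Hd _ Cw i j ij; rewrite !mxE.
  have [mu [mu0 Hmu]] := @weights R n.+1 w a k d th w0 ak aN Hdw th0 thd N1.
  exists (fun i => w i - (if i == k then th else 0) + mu * a i); split => //.
  have Sc : \sum_i (if i == k then th else 0) = th.
    by rewrite (bigD1 k) //= eqxx big1 ?addr0 // => i /negPf ->.
  have Scv : \sum_i (if i == k then th else 0) *: v i = th *: v k.
    by rewrite (bigD1 k) //= eqxx big1 ?addr0 // => i /negPf ->; rewrite scale0r.
  split.
    by rewrite big_split sumrB /= -mulr_sumr Sa mulr0 addr0 w1 Sc.
  exists mu.
  under eq_bigr do rewrite scalerDl scalerBl.
  rewrite big_split sumrB /= -xE Scv; congr (_ + _).
  by rewrite -Sav scaler_sumr; apply: eq_bigr => i _; rewrite scalerA.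
split.
  move=> u uu; have [k Hk] := core u uu.
  pose g := th / N *: \sum_i v i - th *: v k.
  exists (proj_perp u g); split; first exact: proj_orth.
  move=> _ [_ [x Kx <-] <-].
  have [b [b0 [b1 [mu bE]]]] := Hk x Kx.
  pose c i := b i + th / N.
  have c0 : forall i, th / N <= c i by move=> i; rewrite /c lerDr.
  have c1 : \sum_i c i = 1.
    rewrite big_split /= b1 sumr_const card_ord -mulr_natl -/N mulrC divfK ?lt0r_neq0 //.
    by rewrite subrK.
  have cE : \sum_i c i *: v i = x + g + mu *: u.
    rewrite /c; under eq_bigr do rewrite scalerDl.
    rewrite big_split /= bE -scaler_sumr /g.
    rewrite addrAC; congr (_ + _); rewrite -addrA; congr (_ + _); by rewrite addrC.
  have pY : proj_perp u (\sum_i c i *: v i) = proj_perp u x + proj_perp u g.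
    by rewrite cE projD (projD u x g) projZ (proj_u u uu) scaler0 addr0.
  split.
    exists (\sum_i c i *: v i) => //.
    exists c; split; first by move=> i; apply: le_trans (c0 i); rewrite divr_ge0 // ltW.
    by split => // i; rewrite finset.in_setT.
  have [e [e0 He]] := @coef_bound R n B (th / N) (divr_gt0 th0 N0).
  exists e; split => // y' Hy' hd.
  set z := proj_perp u x + proj_perp u g in pY hd *.
  have hu : dotp (y' - z) u = 0.
    rewrite dotpBl (@aff_hull_orth R n u _ y' uu Hy') -pY proj_orth // subrr //.
  have [Sh Shv] := HB (y' - z).
  have Hb := He _ hd.
  pose c' i := (row_mx (0 : 'rV[R]_1) (y' - z) *m B) 0 i.
  exists (\sum_i (c i + c' i) *: v i).
    exists (fun i => c i + c' i); split.
      move=> i; have := Hb i; have := c0 i; rewrite -/(c' i) => h1 h2.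
      by have := lerD h1 (lerNnormlW h2); rewrite subrr.
    split; first by move=> i; rewrite finset.in_setT.
    by split => //; rewrite big_split /= c1 Sh addr0.
  under eq_bigr do rewrite scalerDl.
  by rewrite big_split /= Shv projD pY proj_id // addrC subrK.
exists ((1 - th)^-1); split.
  by rewrite invf_gt1; lra.
move=> u uu; have [k Hk] := core u uu.
set eps := (1 - th)^-1.
have eps0 : 0 <= eps by rewrite invr_ge0; lra.
exists (- (eps * th) *: proj_perp u (v k)); split.
  by rewrite dotpZl proj_orth // mulr0.
move=> _ [_ [x Kx <-] <-].
have [b [b0 [b1 [mu bE]]]] := Hk x Kx.
exists (\sum_i (eps * b i) *: v i).
  exists (fun i => eps * b i); split; first by move=> i; rewrite mulr_ge0.
  split; first by move=> i; rewrite finset.in_setT.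
  split => //; rewrite -mulr_sumr b1 mulVf //; lra.
have -> : \sum_i (eps * b i) *: v i = eps *: (x - th *: v k + mu *: u).
  by rewrite -bE scaler_sumr; apply: eq_bigr => i _; rewrite scalerA.
rewrite projZ !projD projN !projZ (proj_u u uu) scaler0 addr0 scalerDr scalerN scalerA.
by rewrite scaleNr.
Qed.
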